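(* For $n\ge1$ let $T_n$ be the number of domino tilings of $C_3\times P_{2n}$. For $n\ge0$ let $t_n$ be the number of domino tilings of the graph obtained from $C_3\times P_{2n+1}$ by deleting one vertex of the end copy $C_3\times\{1\}$. Then $$T_n=T_{n-1}+3t_{n-1}\ (n\ge2),\qquad t_n=T_n+t_{n-1}\ (n\ge1),$$ and $T_n=5T_{n-1}-T_{n-2}$ $(n\ge3)$, $t_n=5t_{n-1}-t_{n-2}$ $(n\ge2)$. Moreover, $$T_n=\frac1{14}\Big[(7+\sqrt{21})\Big(\tfrac{5+\sqrt{21}}2\Big)^n+(7-\sqrt{21})\Big(\tfrac{5-\sqrt{21}}2\Big)^n\Big]\quad(n\ge1),$$ $$t_n=\frac{1}{\sqrt{21}}\Big[\Big(\tfrac{5+\sqrt{21}}2\Big)^{n+1}-\Big(\tfrac{5-\sqrt{21}}2\Big)^{n+1}\Big]\quad(n\ge0).$$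
   Context: $H\times K$ denotes the Cartesian product of graphs. $P_m$ is the path with vertex set $\{1,\dots,m\}$ and $C_3$ is the triangle. A domino tiling of a finite graph is a perfect matching, and the number of domino tilings is the number of perfect matchings. *)

(* Defs.v *)
From mathcomp Require Import all_boot.
Set Implicit Arguments. Unset Strict Implicit. Unset Printing Implicit Defensive.

(* A simple graph on a finite type V given by a symmetric irreflexive relation e;
   U is the set of vertices kept (induced subgraph on U). *)
Definition perfect_matching (V : finType) (e : rel V) (U : {set V})
    (M : {set {set V}}) : bool :=
  [forall E in M, exists x, exists y,
      [&& x != y, e x y, x \in U, y \in U & E == [set x; y]]] &&
  [forall x in U, #|[set E in M | x \in E]| == 1].

(* number of domino tilings = number of perfect matchings *)
Definition num_tilings (V : finType) (e : rel V) (U : {set V}) : nat :=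
  #|[set M : {set {set V}} | perfect_matching e U M]|.

(* Cartesian product C_3 x P_m; vertices (a, i) with a : 'I_3 (triangle)
   and i : 'I_m (path vertex i+1 of P_m = {1..m}). *)
Definition prism_rel (m : nat) : rel ('I_3 * 'I_m) :=
  fun u v =>
    ((u.1 == v.1) && ((u.2.+1 == v.2 :> nat) || (v.2.+1 == u.2 :> nat)))
    || ((u.2 == v.2) && (u.1 != v.1)).

Definition T (n : nat) : nat := num_tilings (@prism_rel n.*2) [set: 'I_3 * 'I_n.*2].

Definition t (n : nat) : nat :=
  num_tilings (@prism_rel n.*2.+1) ([set: 'I_3 * 'I_n.*2.+1] :\ (ord0, ord0)).

(* Main.v *)
Require Import Defs.
From mathcomp Require Import all_boot zify.
From Stdlib Require Import Reals Lra.
Set Implicit Arguments. Unset Strict Implicit. Unset Printing Implicit Defensive.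

Section Gen.
Variables (V : finType) (e : rel V).

Definition P1 (U : {set V}) (M : {set {set V}}) :=
  forall E, E \in M -> exists x y, [/\ x != y, e x y, x \in U, y \in U & E = [set x; y]].
Definition P2 (U : {set V}) (M : {set {set V}}) :=
  forall x, x \in U -> exists2 E, E \in M & x \in E.
Definition P3 (U : {set V}) (M : {set {set V}}) :=
  forall x E1 E2, x \in U -> E1 \in M -> E2 \in M -> x \in E1 -> x \in E2 -> E1 = E2.

Lemma pmE U M : perfect_matching e U M <-> [/\ P1 U M, P2 U M & P3 U M].
Proof.
rewrite /perfect_matching; split.
- case/andP => /forall_inP H1 /forall_inP H2; split.
  + move=> E /H1 /existsP[x /existsP[y /and5P[? ? ? ? /eqP ?]]]. by exists x, y.
  + move=> x /H2 /cards1P[E0 HE0]; exists E0.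
    * have: E0 \in [set E in M | x \in E] by rewrite HE0 set11.
      by rewrite inE => /andP[].
    * have: E0 \in [set E in M | x \in E] by rewrite HE0 set11.
      by rewrite inE => /andP[].
  + move=> x E1 E2 xU E1M E2M xE1 xE2.
    have /cards1P[E0 HE0] := H2 x xU.
    have: E1 \in [set E in M | x \in E] by rewrite inE E1M.
    have: E2 \in [set E in M | x \in E] by rewrite inE E2M.
    by rewrite HE0 !inE => /eqP-> /eqP->.
- case=> H1 H2 H3; apply/andP; split.
  + apply/forall_inP => E /H1 [x [y [? ? ? ? ->]]].
    apply/existsP; exists x; apply/existsP; exists y. by rewrite eqxx; apply/and5P.
  + apply/forall_inP => x xU. have [E0 E0M xE0] := H2 x xU.
    apply/cards1P; exists E0; apply/setP => E; rewrite !inE.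
    apply/andP/eqP => [[EM xE]|->]; [exact: H3 xU EM E0M xE xE0 | by []].
Qed.

Lemma P1_sub U M E z : P1 U M -> E \in M -> z \in E -> z \in U.
Proof. by move=> H /H [x [y [_ _ xU yU ->]]]; rewrite !inE => /orP[] /eqP->. Qed.

End Gen.

Lemma preim_pair (V W : finType) (f : V -> W) x y : injective f ->
  f @^-1: [set f x; f y] = [set x; y].
Proof. by move=> fi; apply/setP => z; rewrite !inE !(inj_eq fi). Qed.

Lemma img_pair (V W : finType) (f : V -> W) x y : f @: [set x; y] = [set f x; f y].
Proof. by rewrite imsetU1 imset_set1. Qed.

Lemma tilings_inj (V W : finType) (e : rel V) (e' : rel W) (f : V -> W) (U : {set V}) :
  injective f -> {in U &, forall u v, e' (f u) (f v) = e u v} ->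
  num_tilings e U = num_tilings e' (f @: U).
Proof.
move=> fi fe.
set Phi := fun M : {set {set V}} => [set f @: (E : {set V}) | E in M].
have Phii : injective Phi by apply: imset_inj; apply: imset_inj.
rewrite /num_tilings -(card_imset _ Phii); apply: eq_card => M'.
rewrite [in RHS]inE; apply/imsetP/idP.
- case=> M; rewrite inE => /pmE[H1 H2 H3] ->; apply/pmE; split.
  + move=> E' /imsetP[E EM ->]. have [x [y [xy exy xU yU ->]]] := H1 _ EM.
    exists (f x), (f y); split; rewrite ?(inj_eq fi) ?fe ?imset_f ?img_pair //.
  + move=> w /imsetP[x xU ->]. have [E EM xE] := H2 x xU.
    by exists (f @: E); rewrite ?imset_f.
  + move=> w E1' E2' /imsetP[x xU ->] /imsetP[E1 E1M ->] /imsetP[E2 E2M ->].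
    rewrite !mem_imset // => xE1 xE2. by rewrite (H3 x E1 E2).
- move=> /pmE[H1 H2 H3].
  exists [set f @^-1: (E' : {set W}) | E' in M'].
  + rewrite inE; apply/pmE; split.
    * move=> E /imsetP[E' E'M ->]. have [w1 [w2 [w12 ew w1U w2U ->]]] := H1 _ E'M.
      case/imsetP: w1U => x xU ?; case/imsetP: w2U => y yU ?; subst w1 w2.
      exists x, y; split => //; first by rewrite -(inj_eq fi).
        by rewrite -fe. by rewrite preim_pair.
    * move=> x xU. have [E' E'M xE'] := H2 (f x) (imset_f _ xU).
      by exists (f @^-1: E'); rewrite ?imset_f ?inE.
    * move=> x E1 E2 xU /imsetP[E1' E1M ->] /imsetP[E2' E2M ->]; rewrite !inE => a b.
      by rewrite (H3 (f x) E1' E2') ?imset_f.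
  + rewrite /Phi -imset_comp -[LHS]imset_id; apply: eq_in_imset => E' E'M /=.
    have [w1 [w2 [w12 ew w1U w2U ->]]] := H1 _ E'M.
    case/imsetP: w1U => x xU ?; case/imsetP: w2U => y yU ?; subst w1 w2.
    by rewrite preim_pair // img_pair.
Qed.

Section Exp.
Variables (V : finType) (e : rel V).
Hypothesis esym : forall x y, e x y = e y x.
Hypothesis eirr : forall x, e x x = false.

Lemma pair_inj (x y1 y2 : V) : y1 != x -> y2 != x -> [set x; y1] = [set x; y2] -> y1 = y2.
Proof.
move=> h1 h2 H. have : y1 \in [set x; y2] by rewrite -H !inE eqxx orbT.
by rewrite !inE (negbTE h1) => /eqP.
Qed.

Lemma neq_of_e (x y : V) : e x y -> y != x.
Proof. by apply: contraTneq => ->; rewrite eirr. Qed.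

Lemma tilings_expand (U : {set V}) x : x \in U ->
  num_tilings e U = \sum_(y in [set y in U | e x y]) num_tilings e (U :\ x :\ y).
Proof.
move=> xU.
set N := [set y in U | e x y].
set A := [set M | perfect_matching e U M].
pose p := fun M : {set {set V}} => odflt x [pick y in N | [set x; y] \in M].
have ex1 : forall M, M \in A -> exists2 y, y \in N & [set x; y] \in M.
  move=> M; rewrite inE => /pmE[H1 H2 H3].
  have [E EM xE] := H2 x xU. have [a [b [ab eab aU bU EE]]] := H1 _ EM.
  move: xE; rewrite EE !inE => /orP[] /eqP xe; subst x.
  - exists b; first by rewrite /N inE bU eab.
    by rewrite -EE.
  - exists a; first by rewrite /N inE aU esym eab.
    by rewrite setUC -EE.
have uniq1 : forall M y1 y2, M \in A -> y1 \in N -> y2 \in N ->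
    [set x; y1] \in M -> [set x; y2] \in M -> y1 = y2.
  move=> M y1 y2; rewrite inE => /pmE[H1 H2 H3].
  rewrite !inE => /andP[_ e1] /andP[_ e2] M1 M2.
  apply: pair_inj (neq_of_e e1) (neq_of_e e2) _.
  by apply: (H3 x) => //; rewrite !inE eqxx.
have pP : forall M y, M \in A -> y \in N -> ([set x; y] \in M) = (p M == y).
  move=> M y MA yN; rewrite /p; case: pickP => [z /andP[zN zM]|H] /=.
  - apply/idP/eqP => [yM|<-//]; exact: uniq1 MA zN yN zM yM.
  - have [z zN zM] := ex1 M MA. by move: (H z); rewrite zN zM.
have pN : forall M, M \in A -> p M \in N.
  move=> M MA; have [z zN zM] := ex1 M MA. by rewrite (pP _ _ MA zN) in zM; rewrite (eqP zM).
rewrite /num_tilings -/A -sum1_card (partition_big p (mem N) pN).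
apply: eq_bigr => y yN0.
have yN : y \in N := yN0.
rewrite sum1dep_card.
have yU : y \in U by move: yN; rewrite /N inE => /andP[].
have exy : e x y by move: yN; rewrite /N inE => /andP[].
have yx := neq_of_e exy.
set D := [set M | (M \in A) && (p M == y)].
have DE : forall M, (M \in D) = (M \in A) && ([set x; y] \in M).
  move=> M; rewrite inE; case MA: (M \in A) => //=; by rewrite pP.
set g := fun M : {set {set V}} => M :\ [set x; y].
have gi : {in D &, injective g}.
  move=> M1 M2; rewrite !DE => /andP[_ h1] /andP[_ h2] /= H.
  by rewrite -(setD1K h1) -(setD1K h2); congr (_ |: _).
rewrite -(card_in_imset gi); apply: eq_card => M'.
rewrite [in RHS]inE; apply/imsetP/idP.
- case=> M; rewrite DE => /andP[]; rewrite inE => /pmE[H1 H2 H3] xyM ->.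
  apply/pmE; split.
  + move=> E; rewrite !inE => /andP[Exy EM].
    have [a [b [ab eab aU bU EE]]] := H1 _ EM.
    have notxy : forall z, z \in E -> (z != x) && (z != y).
      move=> z zE; apply/andP; split; apply/negP => /eqP zz; subst z; move/negP: Exy; apply.
      * by apply/eqP; apply: (H3 x) => //; rewrite !inE eqxx.
      * by apply/eqP; apply: (H3 y) => //; rewrite !inE eqxx ?orbT.
    exists a, b; split => //; rewrite !inE ?aU ?bU andbT.
    * by rewrite andbC; apply: notxy; rewrite EE !inE eqxx.
    * by rewrite andbC; apply: notxy; rewrite EE !inE eqxx orbT.
  + move=> z; rewrite !inE => /and3P[zy zx zU].
    have [E EM zE] := H2 z zU; exists E => //.
    rewrite !inE EM andbT; apply: contraNneq zx => ?; subst E.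
    by move: zE; rewrite !inE (negbTE zy) orbF.
  + move=> z E1 E2; rewrite !inE => /and3P[_ _ zU] /andP[_ E1M] /andP[_ E2M].
    exact: H3.
- move=> /pmE[H1 H2 H3].
  have subU : forall E z, E \in M' -> z \in E -> [&& z != y, z != x & z \in U].
    by move=> E z EM zE; have := P1_sub H1 EM zE; rewrite !inE.
  have nM : [set x; y] \notin M'.
    apply/negP => xyM; have := subU _ x xyM. by rewrite !inE eqxx /= andbF => /(_ isT).
  exists ([set x; y] |: M'); last by rewrite /g setU1K.
  rewrite DE setU11 andbT inE; apply/pmE; split.
  + move=> E; rewrite !inE => /orP[/eqP->|EM].
    * by exists x, y; split; rewrite // eq_sym.
    * have [a [b [ab eab aU bU EE]]] := H1 _ EM.
      by exists a, b; move: aU bU; rewrite !inE => /and3P[_ _ aU'] /and3P[_ _ bU']; split.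
  + move=> z zU. case: (z =P x) => [->|zx]; first by exists [set x; y]; rewrite !inE eqxx.
    case: (z =P y) => [->|zy]; first by exists [set x; y]; rewrite !inE eqxx ?orbT.
    have zU' : z \in U :\ x :\ y.
      by rewrite !inE zU andbT; apply/andP; split; apply/negP => /eqP.
    have [E EM zE] := H2 z zU'.
    by exists E; rewrite // !inE EM orbT.
  + move=> z E1 E2 zU; rewrite !inE => /orP[/eqP->|E1M] /orP[/eqP->|E2M] //.
    * move=> zxy zE2; have := subU _ _ E2M zE2.
      by move: zxy; rewrite !inE => /orP[]/eqP->; rewrite eqxx ?andbF.
    * move=> zE1 zxy; have := subU _ _ E1M zE1.
      by move: zxy; rewrite !inE => /orP[]/eqP->; rewrite eqxx ?andbF.
    * move=> zE1 zE2; apply: (H3 z) => //. by have := subU _ _ E1M zE1; rewrite !inE.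
Qed.

End Exp.

Lemma prismE m (u v : 'I_3 * 'I_m) : prism_rel u v =
  ((nat_of_ord u.1 == v.1) && ((u.2.+1 == v.2) || (v.2.+1 == u.2)))
  || ((nat_of_ord u.2 == v.2) && (nat_of_ord u.1 != v.1)).
Proof. by []. Qed.

Lemma prism_sym m (u v : 'I_3 * 'I_m) : prism_rel u v = prism_rel v u.
Proof. rewrite !prismE; lia. Qed.

Lemma prism_irr m (u : 'I_3 * 'I_m) : prism_rel u u = false.
Proof. rewrite !prismE; lia. Qed.

Definition Sp m (P : nat -> nat -> bool) : {set 'I_3 * 'I_m} := [set v : 'I_3 * 'I_m | P v.1 v.2].

Definition cnt m P := num_tilings (@prism_rel m) (Sp m P).

Lemma eqS m P Q : (forall b j, b < 3 -> j < m -> P b j = Q b j) -> Sp m P = Sp m Q.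
Proof. move=> H; apply/setP => [[b j]]; rewrite !inE /=; exact: H. Qed.

Lemma cnt_eq m P Q : (forall b j, b < 3 -> j < m -> P b j = Q b j) -> cnt m P = cnt m Q.
Proof. by move=> H; rewrite /cnt (eqS H). Qed.

Lemma expandS m (P : nat -> nat -> bool) (x : 'I_3 * 'I_m) : P x.1 x.2 ->
  cnt m P = \sum_(y in [set y in Sp m P | prism_rel x y])
     cnt m (fun b j => [&& P b j, ~~((b == x.1) && (j == x.2)) & ~~((b == y.1) && (j == y.2))]).
Proof.
move=> Px; rewrite /cnt (tilings_expand (@prism_sym m) (@prism_irr m) (x:=x)); last by rewrite inE.
apply: eq_bigr => y _; congr num_tilings; apply/setP => v; rewrite !inE.
case: v x Px y => [a i] [c k] /= _ [d l] /=; rewrite !xpair_eqE.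
rewrite -!(inj_eq val_inj) /=. lia.
Qed.

Definition sw (c b : nat) : nat := if b == 0 then c else if b == c then 0 else b.

Lemma sw_lt c b : c < 3 -> b < 3 -> sw c b < 3.
Proof. by rewrite /sw; case: ifP => // _; case: ifP. Qed.

Lemma swK c b : c < 3 -> b < 3 -> sw c (sw c b) = b.
Proof. by move: c b => [|[|[|c]]] [|[|[|b]]]. Qed.

Lemma sw_eq c a b : c < 3 -> a < 3 -> b < 3 -> (sw c a == sw c b) = (a == b).
Proof. by move: c a b => [|[|[|c]]] [|[|[|a]]] [|[|[|b]]]. Qed.

Definition swo c (b : 'I_3) : 'I_3 := inord (sw c b).

Lemma swoE c (b : 'I_3) : c < 3 -> nat_of_ord (swo c b) = sw c b.
Proof. by move=> c3; rewrite /swo inordK // sw_lt. Qed.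

Lemma shift_lt m m' s (i : 'I_m) : s + m = m' -> s + i < m'.
Proof. by move=> <-; rewrite ltn_add2l. Qed.

Lemma shift m m' s c (P : nat -> nat -> bool) : s + m = m' -> c < 3 ->
  cnt m P = cnt m' (fun b j => (s <= j) && P (sw c b) (j - s)).
Proof.
move=> H c3.
pose f := fun v : 'I_3 * 'I_m => (swo c v.1, Ordinal (shift_lt v.2 H)).
have fi : injective f.
  move=> [a i] [b j] [] /(congr1 val); rewrite /= !swoE // => /eqP; rewrite sw_eq // => /eqP ab.
  move/eqP; rewrite eqn_add2l => /eqP ij.
  by congr pair; apply: val_inj.
rewrite /cnt (tilings_inj (e' := @prism_rel m') fi).
  congr num_tilings; apply/setP => [[b j]]; rewrite inE /=; apply/imsetP/idP.
  - case=> [[a i]]; rewrite inE /= => Pai [->]; move/(congr1 val) => /= ->.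
    by rewrite swoE // swK // leq_addr addKn.
  - case/andP => sj Pj.
    have jm : j - s < m by have := ltn_ord j; rewrite -{2}H; lia.
    exists (swo c b, Ordinal jm); first by rewrite inE /= swoE.
    rewrite /f /=; congr pair; apply: val_inj => /=; last by rewrite subnKC.
    by rewrite !swoE // ?sw_lt // swK.
move=> [a i] [b j] _ _; rewrite !prismE /= !swoE // sw_eq //; lia.
Qed.

Lemma sum_nb1 (V : finType) (A : {set V}) (F : V -> nat) y1 :
  (forall y, (y \in A) = (y == y1)) -> \sum_(y in A) F y = F y1.
Proof.
move=> H; have -> : A = [set y1] by apply/setP => y; rewrite H inE.
by rewrite big_set1.
Qed.

Lemma sum_nb2 (V : finType) (A : {set V}) (F : V -> nat) y1 y2 :
  (forall y, (y \in A) = (y == y1) || (y == y2)) -> y1 != y2 ->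
  \sum_(y in A) F y = F y1 + F y2.
Proof.
move=> H n12; have -> : A = [set y1; y2] by apply/setP => y; rewrite H !inE.
by rewrite big_setU1 ?big_set1 // inE.
Qed.

Lemma sum_nb3 (V : finType) (A : {set V}) (F : V -> nat) y1 y2 y3 :
  (forall y, (y \in A) = [|| y == y1, y == y2 | y == y3]) -> y1 != y2 -> y1 != y3 -> y2 != y3 ->
  \sum_(y in A) F y = F y1 + F y2 + F y3.
Proof.
move=> H n12 n13 n23; have -> : A = y1 |: (y2 |: [set y3]) by apply/setP => y; rewrite H !inE.
rewrite big_setU1 /=; last by rewrite !inE negb_or n12 n13.
by rewrite big_setU1 ?big_set1 ?addnA // inE.
Qed.

Definition TRUE : nat -> nat -> bool := fun _ _ => true.
Definition tp : nat -> nat -> bool := fun b j => ~~((b == 0) && (j == 0)).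

Ltac nbt := let b := fresh "b" in let j := fresh "j" in
  move=> [b j]; rewrite !inE prismE /= ?/tp ?/TRUE !xpair_eqE -!(inj_eq val_inj) /=;
  have := ltn_ord b; have := ltn_ord j; lia.

Lemma sw0 c b : c < 3 -> b < 3 -> (sw c b == 0) = (b == c).
Proof. by move: c b => [|[|[|c]]] [|[|[|b]]]. Qed.


Notation o0 := (@Ordinal 3 0 isT).
Notation o1 := (@Ordinal 3 1 isT).
Notation o2 := (@Ordinal 3 2 isT).

Lemma Tstep k : cnt (k.*2.+2) TRUE = cnt (k.*2) TRUE + 3 * cnt (k.*2.+1) tp.
Proof.
have -> : cnt (k.*2) TRUE + 3 * cnt (k.*2.+1) tp =
  cnt (k.*2.+1) tp + cnt (k.*2.+1) tp + (cnt (k.*2.+1) tp + cnt (k.*2) TRUE) by lia.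
rewrite (expandS (x := (o0, @Ordinal (k.*2.+2) 0 isT))) //.
rewrite (@sum_nb3 _ _ _ ((o1, @Ordinal (k.*2.+2) 0 isT)) ((o2, @Ordinal (k.*2.+2) 0 isT))
   ((o0, @Ordinal (k.*2.+2) 1 isT))) //; last by nbt.
congr (_ + _ + _).
- rewrite (expandS (x := (o2, @Ordinal (k.*2.+2) 0 isT))) //.
  rewrite (@sum_nb1 _ _ _ ((o2, @Ordinal (k.*2.+2) 1 isT))); last by nbt.
  rewrite [RHS](@shift _ (k.*2.+2) 1 2) //; apply: cnt_eq => b j hb hj /=.
  rewrite /tp sw0 //; lia.
- rewrite (expandS (x := (o1, @Ordinal (k.*2.+2) 0 isT))) //.
  rewrite (@sum_nb1 _ _ _ ((o1, @Ordinal (k.*2.+2) 1 isT))); last by nbt.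
  rewrite [RHS](@shift _ (k.*2.+2) 1 1) //; apply: cnt_eq => b j hb hj /=.
  rewrite /tp sw0 //; lia.
- rewrite (expandS (x := (o1, @Ordinal (k.*2.+2) 0 isT))) //.
  rewrite (@sum_nb2 _ _ _ ((o2, @Ordinal (k.*2.+2) 0 isT)) ((o1, @Ordinal (k.*2.+2) 1 isT))) //;
    last by nbt.
  congr (_ + _).
  + rewrite [RHS](@shift _ (k.*2.+2) 1 0) //; apply: cnt_eq => b j hb hj /=.
    rewrite /tp sw0 //; lia.
  + rewrite (expandS (x := (o2, @Ordinal (k.*2.+2) 0 isT))) //.
    rewrite (@sum_nb1 _ _ _ ((o2, @Ordinal (k.*2.+2) 1 isT))); last by nbt.
    rewrite [RHS](@shift _ (k.*2.+2) 2 0) //; apply: cnt_eq => b j hb hj /=.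
    rewrite /TRUE; lia.
Qed.

Lemma tstep k : cnt (k.*2.+3) tp = cnt (k.*2.+2) TRUE + cnt (k.*2.+1) tp.
Proof.
rewrite (expandS (x := (o1, @Ordinal (k.*2.+3) 0 isT))) //.
rewrite (@sum_nb2 _ _ _ ((o2, @Ordinal (k.*2.+3) 0 isT)) ((o1, @Ordinal (k.*2.+3) 1 isT))) //;
  last by nbt.
congr (_ + _).
- rewrite [RHS](@shift _ (k.*2.+3) 1 0) //; apply: cnt_eq => b j hb hj /=.
  rewrite /TRUE /tp; lia.
- rewrite (expandS (x := (o2, @Ordinal (k.*2.+3) 0 isT))) //.
  rewrite (@sum_nb1 _ _ _ ((o2, @Ordinal (k.*2.+3) 1 isT))); last by nbt.
  rewrite (expandS (x := (o0, @Ordinal (k.*2.+3) 1 isT))) //.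
  rewrite (@sum_nb1 _ _ _ ((o0, @Ordinal (k.*2.+3) 2 isT))); last by nbt.
  rewrite [RHS](@shift _ (k.*2.+3) 2 0) //; apply: cnt_eq => b j hb hj /=.
  rewrite /tp sw0 //; lia.
Qed.

Lemma num_empty (V : finType) (e : rel V) : num_tilings e set0 = 1.
Proof.
rewrite /num_tilings; apply/eqP/cards1P; exists set0; apply/setP => M; rewrite !inE.
apply/idP/eqP => [/pmE[H1 _ _]|->].
- apply/setP => E; rewrite inE; apply/negP => /H1 [x [y [_ _]]]; by rewrite inE.
- apply/pmE; split => [E|x|x]; by rewrite inE.
Qed.

Lemma cnt_empty m P : (forall b j, b < 3 -> j < m -> P b j = false) -> cnt m P = 1.
Proof.
move=> H; rewrite /cnt.
have -> : Sp m P = set0 by apply/setP => [[b j]]; rewrite !inE /= H.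
exact: num_empty.
Qed.

Lemma T0 : cnt 0 TRUE = 1.
Proof. by apply: cnt_empty. Qed.

Lemma t0 : cnt 1 tp = 1.
Proof.
rewrite (expandS (x := (o1, @Ordinal 1 0 isT))) //.
rewrite (@sum_nb1 _ _ _ ((o2, @Ordinal 1 0 isT))); last by nbt.
apply: cnt_empty => b j hb hj /=; rewrite /tp; lia.
Qed.

Lemma TE n : T n = cnt n.*2 TRUE.
Proof. by rewrite /T /cnt; congr num_tilings; apply/setP => v; rewrite !inE. Qed.

Lemma tE n : t n = cnt n.*2.+1 tp.
Proof.
rewrite /t /cnt; congr num_tilings; apply/setP => [[b j]]; rewrite !inE /tp /=.
rewrite andbT xpair_eqE -!(inj_eq val_inj) /=. lia.
Qed.

Lemma recT n : 1 <= n -> T n = T n.-1 + 3 * t n.-1.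
Proof. by case: n => // k _; rewrite !TE tE doubleS Tstep. Qed.

Lemma rect n : 1 <= n -> t n = T n + t n.-1.
Proof. by case: n => // k _; rewrite !TE !tE doubleS tstep. Qed.

Lemma T_0 : T 0 = 1. Proof. by rewrite TE T0. Qed.
Lemma t_0 : t 0 = 1. Proof. by rewrite tE t0. Qed.

Lemma T1 : T 1 = 4. Proof. by rewrite recT // T_0 t_0. Qed.
Lemma t1 : t 1 = 5. Proof. by rewrite rect // T1 t_0. Qed.
Lemma T2 : T 2 = 19. Proof. by rewrite recT // T1 t1. Qed.

Lemma rec3 n : 3 <= n -> T n + T n.-2 = 5 * T n.-1.
Proof.
case: n => [|[|[|k]]] // _ /=.
have h1 := recT (n:=k.+3) isT. have h2 := rect (n:=k.+2) isT. have h3 := recT (n:=k.+2) isT.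
simpl in h1, h2, h3. lia.
Qed.

Lemma rec4 n : 2 <= n -> t n + t n.-2 = 5 * t n.-1.
Proof.
case: n => [|[|k]] // _ /=.
have h1 := rect (n:=k.+2) isT. have h2 := recT (n:=k.+2) isT. have h3 := rect (n:=k.+1) isT.
simpl in h1, h2, h3. lia.
Qed.

Open Scope R_scope.

Lemma hs : sqrt 21 * sqrt 21 = 21.
Proof. apply sqrt_sqrt; lra. Qed.

Lemma spos : 0 < sqrt 21.
Proof. apply sqrt_lt_R0; lra. Qed.

Lemma pw2 (x : R) k : x * x = 5 * x - 1 -> x ^ (S (S k)) = 5 * x ^ (S k) - x ^ k.
Proof.
move=> H; rewrite /=.
replace (x * (x * x ^ k)) with ((x * x) * x ^ k) by ring.
rewrite H; ring.
Qed.

Lemma ha : ((5 + sqrt 21) / 2) * ((5 + sqrt 21) / 2) = 5 * ((5 + sqrt 21) / 2) - 1.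
Proof. have := hs; nra. Qed.
Lemma hb : ((5 - sqrt 21) / 2) * ((5 - sqrt 21) / 2) = 5 * ((5 - sqrt 21) / 2) - 1.
Proof. have := hs; nra. Qed.

Definition F k := / 14 * ((7 + sqrt 21) * ((5 + sqrt 21) / 2) ^ k
            + (7 - sqrt 21) * ((5 - sqrt 21) / 2) ^ k).
Definition Gf k := / sqrt 21 * (((5 + sqrt 21) / 2) ^ (S k) - ((5 - sqrt 21) / 2) ^ (S k)).

Lemma Frec k : F (S (S k)) = 5 * F (S k) - F k.
Proof. rewrite /F (pw2 _ ha) (pw2 _ hb); ring. Qed.

Lemma Grec k : Gf (S (S k)) = 5 * Gf (S k) - Gf k.
Proof. rewrite /Gf (pw2 _ ha) (pw2 _ hb); ring. Qed.

Lemma F1 : F 1 = 4.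
Proof. rewrite /F /=; have := hs; lra. Qed.
Lemma F2 : F 2 = 19.
Proof. rewrite /F /=. have h := hs. nra. Qed.
Lemma G0 : Gf 0 = 1.
Proof.
rewrite /Gf /=. have sp := spos.
replace ((5 + sqrt 21) / 2 * 1 - (5 - sqrt 21) / 2 * 1) with (sqrt 21) by field.
field; lra.
Qed.
Lemma G1 : Gf 1 = 5.
Proof.
rewrite /Gf /=. have sp := spos.
replace ((5 + sqrt 21) / 2 * ((5 + sqrt 21) / 2 * 1) - (5 - sqrt 21) / 2 * ((5 - sqrt 21) / 2 * 1))
  with (5 * sqrt 21) by field.
field; lra.
Qed.

Lemma Tformula (n : nat) : is_true (leq 1 n) -> INR (T n) = F n.
Proof.
suff H : forall k, INR (T k.+1) = F k.+1 /\ INR (T k.+2) = F k.+2.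
  by case: n => // k _; case: (H k).
elim=> [|k [IH1 IH2]]; first by rewrite T1 T2 F1 F2 /=; split; lra.
split => //.
have r := @rec3 k.+3 isT; simpl in r.
have : INR (T k.+3) = 5 * INR (T k.+2) - INR (T k.+1).
  have := f_equal INR r. have e1 : INR (5 * T k.+2) = INR 5 * INR (T k.+2) := mult_INR 5 _.
  have e2 : INR (T k.+3 + T k.+1) = INR (T k.+3) + INR (T k.+1) := plus_INR _ _.
  have e5 : INR 5 = 5 by simpl; lra.
  rewrite e1 e2 e5; lra.
move=> ->; rewrite IH1 IH2 -Frec //.
Qed.

Lemma tformula (n : nat) : INR (t n) = Gf n.
Proof.
suff H : forall k, INR (t k) = Gf k /\ INR (t k.+1) = Gf k.+1 by case: (H n).
elim=> [|k [IH1 IH2]]; first by rewrite t_0 t1 G0 G1 /=; split; lra.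
split => //.
have r := @rec4 k.+2 isT; simpl in r.
have : INR (t k.+2) = 5 * INR (t k.+1) - INR (t k).
  have := f_equal INR r. have e1 : INR (5 * t k.+1) = INR 5 * INR (t k.+1) := mult_INR 5 _.
  have e2 : INR (t k.+2 + t k) = INR (t k.+2) + INR (t k) := plus_INR _ _.
  have e5 : INR 5 = 5 by simpl; lra.
  rewrite e1 e2 e5; lra.
move=> ->; rewrite IH1 IH2 -Grec //.
Qed.

Close Scope R_scope.

Theorem theorem8 :
  (forall n : nat, 2 <= n -> T n = T n.-1 + 3 * t n.-1) /\
  (forall n : nat, 1 <= n -> t n = T n + t n.-1) /\
  (forall n : nat, 3 <= n -> T n + T n.-2 = 5 * T n.-1) /\
  (forall n : nat, 2 <= n -> t n + t n.-2 = 5 * t n.-1) /\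
  (forall n : nat, 1 <= n ->
     INR (T n) =
     (/ 14 * ((7 + sqrt 21) * ((5 + sqrt 21) / 2) ^ n
            + (7 - sqrt 21) * ((5 - sqrt 21) / 2) ^ n))%R) /\
  (forall n : nat,
     INR (t n) =
     (/ sqrt 21 * (((5 + sqrt 21) / 2) ^ n.+1 - ((5 - sqrt 21) / 2) ^ n.+1))%R).
Proof.
split; first by move=> n n2; apply: recT; lia.
split; first by move=> n n1; apply: rect.
split; first exact: rec3.
split; first exact: rec4.
split; first by move=> n n1; rewrite (Tformula n1).
by move=> n; rewrite tformula.
Qed.
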